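(* Let $u_0,u_1,u_2,u_3$ be nodes of $G$ such that $u_3$ lies on a shortest path between $u_1$ and $u_2$, all pairwise distances among $u_0,u_1,u_2,u_3$ are strictly positive except possibly $d_{u_1,u_3}$, and $$d_{u_1,u_3}=\left\lceil \frac{d_{u_1,u_2}+d_{u_0,u_1}-d_{u_0,u_2}}{2}\right\rceil .$$ Then $$\left\lceil \frac{d_{u_0,u_1}+d_{u_0,u_2}+d_{u_1,u_2}}{2}\right\rceil \le d_{u_0,u_3}+d_{u_1,u_2}\le \left\lceil \frac{d_{u_0,u_1}+d_{u_0,u_2}+d_{u_1,u_2}}{2}\right\rceil + 2\,\delta_{u_0,u_1,u_2,u_3}.$$
   Context: $G=(V,E)$ is a finite connected undirected graph with $n\ge 4$ nodes and $d_{u,v}$ denotes the shortest-path distance (number of edges) between nodes $u,v$. For any four nodes $w_1,w_2,w_3,w_4$, form the three sums $d_{w_1,w_2}+d_{w_3,w_4}$, $d_{w_1,w_3}+d_{w_2,w_4}$, $d_{w_1,w_4}+d_{w_2,w_3}$, order them as $S\le M\le L$, and set $\delta_{w_1,w_2,w_3,w_4}=(L-M)/2$. Also $\delta_{\mathrm{worst}}(G)=\max_{w_1,w_2,w_3,w_4\in V}\delta_{w_1,w_2,w_3,w_4}$. *)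

(* Defs.v *)
From HB Require Import structures.
From mathcomp Require Import all_boot all_order all_algebra.
Set Implicit Arguments. Unset Strict Implicit. Unset Printing Implicit Defensive.
Import Order.TTheory GRing.Theory Num.Theory.

Definition walk_n (T : finType) (e : rel T) (u v : T) (n : nat) : bool :=
  [exists p : n.-tuple T, path e u p && (last u p == v)].

(* shortest-path distance: least n (< #|T|) admitting a walk of length n.
   In a connected graph a shortest path has at most #|T|-1 edges, so this is
   exactly the graph distance. *)
Definition dist (T : finType) (e : rel T) (u v : T) : nat :=
  find (walk_n e u v) (iota 0 #|T|).

Definition delta4 (T : finType) (e : rel T) (w1 w2 w3 w4 : T) : rat :=
  let a := dist e w1 w2 + dist e w3 w4 in
  let b := dist e w1 w3 + dist e w2 w4 in
  let c := dist e w1 w4 + dist e w2 w3 in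
  let L := maxn a (maxn b c) in
  let S := minn a (minn b c) in
  let M := (a + b + c - L - S)%N in
  ((L - M)%N)%:R / 2%:R.

(* Main.v *)
Require Import Defs.
From HB Require Import structures.
From mathcomp Require Import all_boot all_order all_algebra.
From mathcomp Require Import zify lra.
Import Order.TTheory GRing.Theory Num.Theory.

Set Implicit Arguments.
Section G.
Variables (T : finType) (e : rel T) (e_sym : symmetric e)
  (e_conn : forall u v : T, connect e u v).

Lemma walk_ex u v : exists2 n, (n < #|T|)%N & walk_n e u v n.
Proof.
have /connectP [p pp ->] := e_conn u v.
case: (shortenP pp) => p' pp' up' _.
exists (size p').
  by move/card_uniqP: up' => cu; have := max_card (mem (u :: p')); rewrite cu.
by apply/existsP; exists (in_tuple p'); rewrite pp' eqxx.
Qed.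

Lemma dist_spec u v : (dist e u v < #|T|)%N /\ walk_n e u v (dist e u v).
Proof.
have [n hn hw] := walk_ex u v.
have hh : has (walk_n e u v) (iota 0 #|T|).
  by apply/hasP; exists n => //; rewrite mem_iota.
have := nth_find 0 hh; rewrite has_find size_iota in hh.
by rewrite nth_iota // add0n /dist => ->; split.
Qed.

Lemma dist_min u v n : (n < #|T|)%N -> walk_n e u v n -> (dist e u v <= n)%N.
Proof.
move=> hn hw; rewrite leqNgt; apply/negP => lt.
have := before_find 0 lt; rewrite nth_iota // add0n hw //.
Qed.

Lemma walk_cat u v w m k : walk_n e u v m -> walk_n e v w k -> walk_n e u w (m + k).
Proof.
move=> /existsP [p /andP [pp /eqP lp]] /existsP [q /andP [pq /eqP lq]].
apply/existsP; exists (cat_tuple p q).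
by rewrite /= cat_path last_cat lp pp pq lq eqxx.
Qed.

Lemma dist_tri u v w : (dist e u w <= dist e u v + dist e v w)%N.
Proof.
have [h1 w1] := dist_spec u v; have [h2 w2] := dist_spec v w.
have [h3 _] := dist_spec u w.
case: (ltnP (dist e u v + dist e v w) #|T|) => h.
  exact: (@dist_min _ _ _ h (@walk_cat _ _ _ _ _ w1 w2)).
exact: leq_trans (ltnW h3) h.
Qed.

Lemma walk_rev u v n : walk_n e u v n -> walk_n e v u n.
Proof.
move=> /existsP [p /andP [pp /eqP lp]].
have sz : size (rev (belast u p)) == n by rewrite size_rev size_belast size_tuple.
apply/existsP; exists (Tuple sz) => /=.
rewrite -lp rev_path.
rewrite (@eq_path _ _ e); last by move=> a b /=; rewrite e_sym.
rewrite pp /=; clear pp lp sz.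
move: (tval p) => s; case: s => [|a s] /=; first by rewrite eqxx.
by rewrite rev_cons last_rcons eqxx.
Qed.

Lemma dist_sym u v : dist e u v = dist e v u.
Proof.
have [h1 w1] := dist_spec u v; have [h2 w2] := dist_spec v u.
apply/eqP; rewrite eqn_leq.
by rewrite (@dist_min _ _ _ h2 (@walk_rev _ _ _ w2)) (@dist_min _ _ _ h1 (@walk_rev _ _ _ w1)).
Qed.
End G.

Local Open Scope ring_scope.
Lemma ceil_half (k : int) (x : rat) : x = k%:~R / 2 ->
  k <= 2 * Num.ceil x /\ 2 * Num.ceil x <= k + 1.
Proof.
move=> ->; have /andP [h1 h2] := ceil_itv (k%:~R / 2 : rat).
have A : (k%:~R : rat) <= (2 * Num.ceil (k%:~R / 2 : rat))%:~R.
  rewrite intrM; lra.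
have B : ((2 * Num.ceil (k%:~R / 2 : rat) - 2)%:~R : rat) < k%:~R.
  rewrite intrB intrM; rewrite intrB in h1; lra.
rewrite ler_int in A; rewrite ltr_int in B; lia.
Qed.

Theorem mainTheorem1 (T : finType) (e : rel T)
  (e_sym : symmetric e) (e_irr : irreflexive e)
  (e_conn : forall u v : T, connect e u v) (card_T : (4 <= #|T|)%N)
  (u0 u1 u2 u3 : T) :
  (dist e u1 u3 + dist e u3 u2 = dist e u1 u2)%N ->
  (0 < dist e u0 u1)%N -> (0 < dist e u0 u2)%N -> (0 < dist e u0 u3)%N ->
  (0 < dist e u1 u2)%N -> (0 < dist e u2 u3)%N ->
  ((dist e u1 u3)%:Z =
     Num.ceil (((dist e u1 u2)%:Z + (dist e u0 u1)%:Z - (dist e u0 u2)%:Z)%:~R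
               / 2 : rat)) ->
  let s := Num.ceil (((dist e u0 u1 + dist e u0 u2 + dist e u1 u2)%N%:R
                      / 2 : rat)) in
  s <= (dist e u0 u3 + dist e u1 u2)%N%:Z /\
  ((dist e u0 u3 + dist e u1 u2)%N%:R : rat) <= s%:~R + 2 * delta4 e u0 u1 u2 u3.
Proof.
move=> hxy _ _ _ _ _ hx s.
have t1 := @dist_tri _ _ e_conn u0 u3 u1.
have t2 := @dist_tri _ _ e_conn u0 u3 u2.
rewrite (@dist_sym _ _ e_sym e_conn u3 u1) in t1.
have [hx1 hx2] := @ceil_half _ _ (erefl (((dist e u1 u2)%:Z + (dist e u0 u1)%:Z - (dist e u0 u2)%:Z)%:~R / 2 : rat)).
rewrite -hx in hx1 hx2.
have [hs1 hs2] := @ceil_half (dist e u0 u1 + dist e u0 u2 + dist e u1 u2)%N%:Z ((dist e u0 u1 + dist e u0 u2 + dist e u1 u2)%N%:R / 2) (erefl _).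
rewrite -/s in hs1 hs2.
rewrite /delta4 (@dist_sym _ _ e_sym e_conn u2 u3) [2 * _]mulrC divfK //.
rewrite !pmulrn -intrD ler_int.
split; lia.
Qed.
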